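(* Let $F$ be a field of characteristic zero, $\mathrm{Gr}_n$ the Grassmann algebra of $V=\mathrm{Span}\{e_1,\dots,e_n\}$, and $A_0(n)$ the subalgebra of $\mathrm{Gr}_n$ generated by $V$. Let $R$ be a Rota–Baxter operator of weight zero on $\mathrm{Gr}_n$. Then (a) $R(\mathrm{Gr}_n)\subseteq A_0(n)$; (b) $R(e_1\wedge e_2\wedge\dots\wedge e_n)=0$; (c) $(R(1))^{[(n+1)/2]+1}=0$; (d) $\mathrm{rb}(\mathrm{Gr}_n)\le 2[\tfrac{n+1}{2}]+2$.
   Context: A linear operator $R$ on $A$ is a Rota–Baxter operator of weight $0$ if $R(x)R(y)=R(R(x)y+xR(y))$ for all $x,y\in A$. $[\cdot]$ denotes the integer part. The RB-index $\mathrm{rb}(A)$ is the least $n\in\mathbb N$ such that $R^n=0$ for every Rota–Baxter operator $R$ of weight zero on $A$. *)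

(* Defs.v *)
From HB Require Import structures.
From mathcomp Require Import all_boot all_order all_algebra.
Set Implicit Arguments. Unset Strict Implicit. Unset Printing Implicit Defensive.
Import Order.TTheory GRing.Theory Num.Theory.
Local Open Scope ring_scope.

(* The Grassmann algebra Gr_n over F, with basis e_S, S a subset of {0..n-1}
   (e_S = e_{i1} /\ ... /\ e_{ik}, i1 < ... < ik).  An element is the
   function S |-> coefficient of e_S.  Addition / scalar multiplication are
   the pointwise ones of {ffun _ -> F}; the (exterior) product is gr_mul.
   WARNING: do not use the pointwise ring product '*' of ffun; use gr_mul. *)
Notation gr F n := {ffun {set 'I_n} -> (GRing.Field.sort F)^o}.

(* number of inversions when concatenating the (increasing) words S and T *)
Definition gr_inv (n : nat) (S T : {set 'I_n}) : nat :=
  #|[set p : 'I_n * 'I_n | (p.1 \in S) && (p.2 \in T) && (p.2 < p.1)%N]|.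

(* e_S e_T = 0 if S, T intersect, and (-1)^{inv(S,T)} e_{S u T} otherwise *)
Definition gr_mul (F : fieldType) (n : nat) (x y : gr F n) : gr F n :=
  [ffun U : {set 'I_n} =>
     \sum_(S : {set 'I_n}) \sum_(T : {set 'I_n} | [disjoint S & T] && (S :|: T == U))
        (-1) ^+ gr_inv S T * x S * y T].

Definition gr_one (F : fieldType) (n : nat) : gr F n :=
  [ffun S : {set 'I_n} => (S == set0)%:R].

(* generator e_{i+1} *)
Definition gr_e (F : fieldType) (n : nat) (i : 'I_n) : gr F n :=
  [ffun S : {set 'I_n} => (S == [set i])%:R].

Definition gr_top (F : fieldType) (n : nat) : gr F n :=
  \big[@gr_mul F n / gr_one F n]_(i < n) gr_e F i.

Definition gr_exp (F : fieldType) (n : nat) (x : gr F n) (k : nat) : gr F n :=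
  iter k (gr_mul x) (gr_one F n).

Definition in_V (F : fieldType) (n : nat) (x : gr F n) : Prop :=
  exists a : 'I_n -> F, x = \sum_(i < n) a i *: gr_e F i.

Inductive A0 (F : fieldType) (n : nat) : gr F n -> Prop :=
  | A0_V : forall x, in_V x -> A0 x
  | A0_add : forall x y, A0 x -> A0 y -> A0 (x + y)
  | A0_scale : forall (a : F) x, A0 x -> A0 (a *: x)
  | A0_mul : forall x y, A0 x -> A0 y -> A0 (gr_mul x y).

Definition linear_op (F : fieldType) (n : nat) (R : gr F n -> gr F n) : Prop :=
  forall (a : F) (x y : gr F n), R (a *: x + y) = a *: R x + R y.

Definition is_RB0 (F : fieldType) (n : nat) (R : gr F n -> gr F n) : Prop :=
  linear_op R /\
  forall x y : gr F n,
    gr_mul (R x) (R y) = R (gr_mul (R x) y + gr_mul x (R y)).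

(* rb(Gr_n) <= N : the least m with R^m = 0 for all RB operators of weight 0
   exists and is at most N. *)
Definition rb_le (F : fieldType) (n : nat) (N : nat) : Prop :=
  exists m : nat, (m <= N)%N /\
    forall R : gr F n -> gr F n, is_RB0 R -> forall x, iter m R x = 0.

(* Main.v *)
Require Import Defs.
From HB Require Import structures.
From mathcomp Require Import all_boot all_order all_algebra.
From mathcomp Require Import ring zify.
Import GRing.Theory.
Local Open Scope ring_scope.
Set Implicit Arguments. Unset Strict Implicit.

Section Gr.
Variables (F : fieldType) (n : nat).
Local Notation G := (gr F n).
Implicit Types x y z : G.
Local Notation "x ** y" := (gr_mul x y) (at level 40).

Definition PP (S T U : {set 'I_n}) := [disjoint S & T] && (S :|: T == U).
Definition sg (S T : {set 'I_n}) : F := (-1) ^+ gr_inv S T.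

Lemma addE x y U : (x + y) U = x U + y U. Proof. by rewrite ffunE. Qed.
Lemma scaleE (a : F) x U : (a *: x) U = a * x U. Proof. by rewrite ffunE. Qed.
Lemma zeroE U : (0 : G) U = 0. Proof. by rewrite ffunE. Qed.
Lemma oppE x U : (- x) U = - x U. Proof. by rewrite ffunE. Qed.
Lemma subE x y U : (x - y) U = x U - y U. Proof. by rewrite !ffunE. Qed.

Lemma gr_mulE x y U : (x ** y) U =
  \sum_S \sum_T (if PP S T U then sg S T * x S * y T else 0).
Proof. by rewrite ffunE; apply: eq_bigr => S _; rewrite big_mkcond. Qed.

Lemma gr_mulDl x y z : (x + y) ** z = x ** z + y ** z.
Proof.
apply/ffunP=> U; rewrite !gr_mulE addE !gr_mulE -big_split; apply: eq_bigr => S _.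
rewrite -big_split; apply: eq_bigr => T _; rewrite !addE.
by case: ifP => _ /=; [rewrite mulrDr mulrDl | rewrite addr0].
Qed.

Lemma gr_mulDr x y z : x ** (y + z) = x ** y + x ** z.
Proof.
apply/ffunP=> U; rewrite !gr_mulE addE !gr_mulE -big_split; apply: eq_bigr => S _.
rewrite -big_split; apply: eq_bigr => T _; rewrite !addE.
by case: ifP => _ /=; [rewrite mulrDr | rewrite addr0].
Qed.

Lemma gr_mulZl (a : F) x y : (a *: x) ** y = a *: (x ** y).
Proof.
apply/ffunP=> U; rewrite !gr_mulE scaleE !gr_mulE mulr_sumr; apply: eq_bigr => S _.
rewrite mulr_sumr; apply: eq_bigr => T _; rewrite !scaleE.
by case: ifP => _ /=; [ring | rewrite mulr0].
Qed.

Lemma gr_mulZr (a : F) x y : x ** (a *: y) = a *: (x ** y).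
Proof.
apply/ffunP=> U; rewrite !gr_mulE scaleE !gr_mulE mulr_sumr; apply: eq_bigr => S _.
rewrite mulr_sumr; apply: eq_bigr => T _; rewrite !scaleE.
by case: ifP => _ /=; [ring | rewrite mulr0].
Qed.

Lemma gr_mul0l x : 0 ** x = 0.
Proof. by have := gr_mulZl 0 0 x; rewrite !scale0r. Qed.
Lemma gr_mul0r x : x ** 0 = 0.
Proof. by have := gr_mulZr 0 x 0; rewrite !scale0r. Qed.
Lemma gr_mulNl x y : (- x) ** y = - (x ** y).
Proof. by rewrite -scaleN1r gr_mulZl scaleN1r. Qed.
Lemma gr_mulNr x y : x ** (- y) = - (x ** y).
Proof. by rewrite -scaleN1r gr_mulZr scaleN1r. Qed.
Lemma gr_mulBl x y z : (x - y) ** z = x ** z - y ** z.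
Proof. by rewrite gr_mulDl gr_mulNl. Qed.
Lemma gr_mulBr x y z : x ** (y - z) = x ** y - x ** z.
Proof. by rewrite gr_mulDr gr_mulNr. Qed.


Lemma gr_mul_sumr x I (r : seq I) (P : pred I) (f : I -> G) :
  x ** (\sum_(i <- r | P i) f i) = \sum_(i <- r | P i) x ** f i.
Proof. exact: (big_morph _ (gr_mulDr x) (gr_mul0r x)). Qed.
Lemma gr_mul_suml x I (r : seq I) (P : pred I) (f : I -> G) :
  (\sum_(i <- r | P i) f i) ** x = \sum_(i <- r | P i) f i ** x.
Proof. by elim/big_rec2: _ => [|i y1 y2 _ <-]; rewrite ?gr_mul0l ?gr_mulDl. Qed.

Lemma disj0l (T : {set 'I_n}) : [disjoint set0 & T].
Proof. by rewrite -setI_eq0 set0I. Qed.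
Lemma disj0r (T : {set 'I_n}) : [disjoint T & set0].
Proof. by rewrite -setI_eq0 setI0. Qed.

Lemma gr_inv0l (T : {set 'I_n}) : gr_inv set0 T = 0%N.
Proof. by apply/eqP; rewrite cards_eq0; apply/eqP/setP => p; rewrite !inE. Qed.
Lemma gr_inv0r (T : {set 'I_n}) : gr_inv T set0 = 0%N.
Proof. by apply/eqP; rewrite cards_eq0; apply/eqP/setP => p; rewrite !inE andbF. Qed.

Lemma oneE U : gr_one F n U = (U == set0)%:R.
Proof. by rewrite ffunE. Qed.

Lemma gr_mul1l x : gr_one F n ** x = x.
Proof.
apply/ffunP => U; rewrite gr_mulE (bigD1 set0) //= [X in _ + X]big1 => [|S HS]; last first.
  by rewrite big1 // => T _; rewrite oneE (negbTE HS); case: ifP; rewrite ?mulr0 ?mul0r.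
rewrite addr0 (bigD1 U) //= [X in _ + X]big1 => [|T hT]; last first.
  by rewrite /PP set0U (negbTE hT) andbF.
by rewrite /PP disj0l set0U eqxx /sg gr_inv0l oneE eqxx expr0 !mul1r addr0.
Qed.

Lemma gr_mul1r x : x ** gr_one F n = x.
Proof.
apply/ffunP => U; rewrite gr_mulE (bigD1 U) //= [X in _ + X]big1 => [|S HS]; last first.
  rewrite (bigD1 set0) //= [X in _ + X]big1 => [|T HT]; last first.
    by rewrite oneE (negbTE HT); case: ifP; rewrite ?mulr0 ?mul0r.
  by rewrite /PP setU0 (negbTE HS) andbF addr0.
rewrite addr0 (bigD1 set0) //= [X in _ + X]big1 => [|T hT]; last first.
  by rewrite oneE (negbTE hT); case: ifP; rewrite ?mulr0.
by rewrite /PP disj0r setU0 eqxx /sg gr_inv0r oneE eqxx expr0 mul1r mulr1 addr0.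
Qed.

Definition Nk (k : nat) x := forall S : {set 'I_n}, (#|S| < k)%N -> x S = 0.

Lemma card_disjU (S T : {set 'I_n}) : [disjoint S & T] -> #|S :|: T| = (#|S| + #|T|)%N.
Proof. by move=> d; rewrite cardsU (disjoint_setI0 d) cards0 subn0. Qed.

Lemma Nk_mul a b x y : Nk a x -> Nk b y -> Nk (a + b) (x ** y).
Proof.
move=> hx hy U hU; rewrite gr_mulE big1 // => S _; rewrite big1 // => T _.
case: ifP => // /andP[d /eqP eU]; move: hU; rewrite -eU card_disjU //.
case: (ltnP #|S| a) => [/hx -> _| ha hU]; first by rewrite mulr0 mul0r.
have /hy -> : (#|T| < b)%N by rewrite -(ltn_add2l #|S|) (leq_trans hU) // leq_add2r.
by rewrite mulr0.
Qed.

Lemma Nk_le a b x : (b <= a)%N -> Nk a x -> Nk b x.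
Proof. by move=> hab h S hS; apply: h; apply: leq_trans hab. Qed.

Lemma Nk_top x : Nk n.+1 x -> x = 0.
Proof.
move=> h; apply/ffunP => S; rewrite zeroE; apply: h.
by rewrite ltnS (leq_trans (max_card _)) // card_ord.
Qed.

Lemma Nk_add k x y : Nk k x -> Nk k y -> Nk k (x + y).
Proof. by move=> hx hy S hS; rewrite addE hx ?hy ?addr0. Qed.
Lemma Nk_scale k (a : F) x : Nk k x -> Nk k (a *: x).
Proof. by move=> hx S hS; rewrite scaleE hx ?mulr0. Qed.
Lemma Nk_opp k x : Nk k x -> Nk k (- x).
Proof. by move=> hx S hS; rewrite oppE hx ?oppr0. Qed.
Lemma Nk0 x : Nk 0 x.
Proof. by []. Qed.
Lemma Nk_zero k : Nk k 0.
Proof. by move=> S _; rewrite zeroE. Qed.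


Lemma disj3 (A B T : {set 'I_n}) :
  [disjoint B & T] && [disjoint A & (B :|: T)] =
  [disjoint A & B] && [disjoint (A :|: B) & T].
Proof.
rewrite -!setI_eq0 setIUr setIUl !setU_eq0.
by case: (A :&: B == set0); case: (A :&: T == set0); case: (B :&: T == set0).
Qed.

Lemma gr_invUr (S T1 T2 : {set 'I_n}) : [disjoint T1 & T2] ->
  gr_inv S (T1 :|: T2) = (gr_inv S T1 + gr_inv S T2)%N.
Proof.
move=> d; rewrite /gr_inv -cardsUI.
set X1 := [set p : 'I_n * 'I_n | (p.1 \in S) && (p.2 \in T1) && _].
set X2 := [set p : 'I_n * 'I_n | (p.1 \in S) && (p.2 \in T2) && _].
have -> : X1 :&: X2 = set0.
  apply/setP => p; rewrite !inE; case h1: (p.2 \in T1); last by rewrite !andbF.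
  by rewrite (disjointFr d h1) !andbF.
rewrite cards0 addn0; apply: eq_card => p; rewrite !inE.
by case: (p.1 \in S); case: (p.2 \in T1); case: (p.2 \in T2); case: (p.2 < p.1)%N.
Qed.

Lemma gr_invUl (S1 S2 T : {set 'I_n}) : [disjoint S1 & S2] ->
  gr_inv (S1 :|: S2) T = (gr_inv S1 T + gr_inv S2 T)%N.
Proof.
move=> d; rewrite /gr_inv -cardsUI.
set X1 := [set p : 'I_n * 'I_n | (p.1 \in S1) && _ && _].
set X2 := [set p : 'I_n * 'I_n | (p.1 \in S2) && _ && _].
have -> : X1 :&: X2 = set0.
  apply/setP => p; rewrite !inE; case h1: (p.1 \in S1) => //=.
  by rewrite (disjointFr d h1) /= andbF.
rewrite cards0 addn0; apply: eq_card => p; rewrite !inE.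
by case: (p.1 \in S1); case: (p.1 \in S2); case: (p.2 \in T); case: (p.2 < p.1)%N.
Qed.

Lemma sg_assoc (A B T : {set 'I_n}) : [disjoint A & B] -> [disjoint B & T] ->
  sg A (B :|: T) * sg B T = sg A B * sg (A :|: B) T.
Proof.
move=> dAB dBT; rewrite /sg -!exprD gr_invUr // gr_invUl //.
by rewrite addnA.
Qed.

Lemma sum_PP (B T : {set 'I_n}) (g : {set 'I_n} -> F) :
  \sum_C (if PP B T C then g C else 0) =
  if [disjoint B & T] then g (B :|: T) else 0.
Proof.
rewrite (bigD1 (B :|: T)) //= big1 => [|C hC]; last first.
  by rewrite /PP eq_sym (negbTE hC) andbF.
by rewrite /PP eqxx andbT addr0.
Qed.

Lemma gr_mulA x y z : x ** (y ** z) = (x ** y) ** z.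
Proof.
apply/ffunP => U; rewrite !gr_mulE.
transitivity (\sum_(A : {set 'I_n}) \sum_(B : {set 'I_n}) \sum_(T : {set 'I_n})
   (if [disjoint B & T] then (if PP A (B :|: T) U then
      sg A (B :|: T) * x A * (sg B T * y B * z T) else 0) else 0)).
  apply: eq_bigr => A _.
  transitivity (\sum_(C : {set 'I_n}) \sum_(B : {set 'I_n}) \sum_(T : {set 'I_n}) (if PP B T C then (if PP A C U then
      sg A C * x A * (sg B T * y B * z T) else 0) else 0)).
    apply: eq_bigr => C _; rewrite gr_mulE; case: ifP => _.
      rewrite mulr_sumr; apply: eq_bigr => B _; rewrite mulr_sumr.
      by apply: eq_bigr => T _; case: ifP; rewrite ?mulr0.
    by symmetry; apply: big1 => B _; apply: big1 => T _; case: ifP.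
  rewrite exchange_big; apply: eq_bigr => B _; rewrite exchange_big.
  by apply: eq_bigr => T _; rewrite sum_PP.
symmetry.
transitivity (\sum_(A : {set 'I_n}) \sum_(B : {set 'I_n}) \sum_(T : {set 'I_n})
   (if [disjoint A & B] then (if PP (A :|: B) T U then
      sg (A :|: B) T * (sg A B * x A * y B) * z T else 0) else 0)).
  transitivity (\sum_(S : {set 'I_n}) \sum_(T : {set 'I_n}) \sum_(A : {set 'I_n}) \sum_(B : {set 'I_n}) (if PP A B S then (if PP S T U then
      sg S T * (sg A B * x A * y B) * z T else 0) else 0)).
    apply: eq_bigr => S _; apply: eq_bigr => T _; rewrite gr_mulE; case: ifP => _.
      rewrite mulr_sumr mulr_suml; apply: eq_bigr => A _; rewrite mulr_sumr mulr_suml.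
      by apply: eq_bigr => B _; case: ifP; rewrite ?mulr0 ?mul0r.
    by symmetry; apply: big1 => A _; apply: big1 => B _; case: ifP.
  rewrite exchange_big.
  transitivity (\sum_(T : {set 'I_n}) \sum_(A : {set 'I_n}) \sum_(B : {set 'I_n}) \sum_(S : {set 'I_n}) (if PP A B S then (if PP S T U then
      sg S T * (sg A B * x A * y B) * z T else 0) else 0)).
    apply: eq_bigr => T _; rewrite exchange_big; apply: eq_bigr => A _.
    by rewrite exchange_big.
  rewrite exchange_big; apply: eq_bigr => A _; rewrite exchange_big.
  apply: eq_bigr => B _; apply: eq_bigr => T _; by rewrite sum_PP.
apply: eq_bigr => A _; apply: eq_bigr => B _; apply: eq_bigr => T _.
rewrite /PP -setUA.
case: (boolP [disjoint B & T]) => dBT; case: (boolP [disjoint A & B]) => dAB.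
- have := disj3 A B T; rewrite dBT dAB /= => ->.
  case: ifP => // _.
  rewrite !mulrA (mulrC (sg (A :|: B) T)) -sg_assoc // -!mulrA; congr (_ * _).
  by rewrite mulrCA.
- by have := disj3 A B T; rewrite dBT (negbTE dAB) /= => ->.
- by have := disj3 A B T; rewrite (negbTE dBT) dAB /= => <-.
- by [].
Qed.


Lemma gr_inv_swap (S T : {set 'I_n}) : [disjoint S & T] ->
  (gr_inv S T + gr_inv T S)%N = (#|S| * #|T|)%N.
Proof.
move=> d; pose sw (p : 'I_n * 'I_n) := (p.2, p.1).
have swK : involutive sw by case.
have -> : gr_inv T S =
    #|[set p : 'I_n * 'I_n | (p.1 \in S) && (p.2 \in T) && (p.1 < p.2)%N]|.
  rewrite /gr_inv -(card_preimset _ (inv_inj swK)); apply: eq_card => p.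
  rewrite !inE /=.
  by case: (p.2 \in T); case: (p.1 \in S).
rewrite /gr_inv -cardsX -cardsUI.
set X1 := [set p : 'I_n * 'I_n | _ && _ && (p.2 < p.1)%N].
set X2 := [set p : 'I_n * 'I_n | _ && _ && (p.1 < p.2)%N].
have -> : X1 :&: X2 = set0.
  apply/setP => p; rewrite !inE.
  by case: (ltngtP p.1 p.2) => _; rewrite ?andbF ?andbT ?andFb.
rewrite cards0 addn0; apply: eq_card => -[a b]; rewrite !inE /=.
case aS: (a \in S); case bT: (b \in T) => //=.
have : a != b by apply/eqP => eab; move: bT; rewrite -eab (disjointFr d aS).
by rewrite neq_ltn orbC.
Qed.

Lemma sg_swap (S T : {set 'I_n}) : [disjoint S & T] ->
  sg T S = (-1) ^+ (#|S| * #|T|) * sg S T.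
Proof.
move=> d; rewrite /sg -(gr_inv_swap d) exprD mulrAC -mulrA.
by rewrite signrMK.
Qed.


Lemma sgn_even m : ~~ odd m -> (-1) ^+ m = 1 :> F.
Proof. by move=> h; rewrite -signr_odd (negbTE h). Qed.
Lemma sgn_odd m : odd m -> (-1) ^+ m = -1 :> F.
Proof. by move=> h; rewrite -signr_odd h expr1. Qed.

Lemma gr_mul_swapE x y U : (y ** x) U =
  \sum_S \sum_T (if PP S T U then sg T S * x S * y T else 0).
Proof.
rewrite gr_mulE exchange_big; apply: eq_bigr => S _; apply: eq_bigr => T _.
rewrite /PP setUC disjoint_sym; case: ifP => // _.
by rewrite -!mulrA (mulrC (y T)).
Qed.

Lemma gr_mulC_even (a y : G) : (forall S : {set 'I_n}, odd #|S| -> a S = 0) -> a ** y = y ** a.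
Proof.
move=> ha; apply/ffunP => U; rewrite gr_mulE gr_mul_swapE.
apply: eq_bigr => S _; apply: eq_bigr => T _; case: ifP => // /andP[d _].
case: (boolP (odd #|S|)) => hS; first by rewrite ha // !mulr0 mul0r.
rewrite sg_swap; last by rewrite disjoint_sym.
by rewrite sgn_even ?mul1r // oddM (negbTE hS) andbF.
Qed.

Lemma gr_mul_odd_sq (h2 : (2%:R : F) != 0) (b : G) :
  (forall S : {set 'I_n}, ~~ odd #|S| -> b S = 0) -> b ** b = 0.
Proof.
move=> hb; apply/ffunP => U; rewrite zeroE.
have e : (b ** b) U = - (b ** b) U.
  rewrite {1}gr_mulE gr_mul_swapE -sumrN; apply: eq_bigr => S _.
  rewrite -sumrN; apply: eq_bigr => T _; case: ifP => [/andP[d _]|]; last by rewrite oppr0.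
  case: (boolP (odd #|S|)) => hS; last by rewrite (hb S hS) !mulr0 mul0r oppr0.
  case: (boolP (odd #|T|)) => hT; last by rewrite (hb T hT) !mulr0 oppr0.
  rewrite sg_swap; last by rewrite disjoint_sym.
  by rewrite sgn_odd ?oddM ?hS ?hT // !mulN1r !mulNr.
have : 2%:R * (b ** b) U = 0 by rewrite mulr2n mulrDl !mul1r {1}e addNr.
by move/eqP; rewrite mulf_eq0 (negbTE h2) /= => /eqP.
Qed.

Lemma gr_expS x k : gr_exp x k.+1 = x ** gr_exp x k.
Proof. by []. Qed.

Lemma half_bound : (n <= ((n.+1)./2).*2)%N.
Proof. have := odd_double_half n.+1; case: (odd n.+1) => /=; lia. Qed.

Lemma nilp_N1 (h2 : (2%:R : F) != 0) (v : G) : Nk 1 v -> gr_exp v ((n.+1)./2).+1 = 0.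
Proof.
move=> hv.
pose a : G := [ffun S : {set 'I_n} => if odd #|S| then 0 else v S].
pose b : G := [ffun S : {set 'I_n} => if odd #|S| then v S else 0].
have vab : v = a + b by apply/ffunP => S; rewrite addE !ffunE; case: ifP; rewrite ?add0r ?addr0.
have aev : forall S : {set 'I_n}, odd #|S| -> a S = 0 by move=> S hS; rewrite ffunE hS.
have bodd : forall S : {set 'I_n}, ~~ odd #|S| -> b S = 0 by move=> S hS; rewrite ffunE (negbTE hS).
have Na : Nk 2 a.
  move=> S; rewrite ffunE; case: ifP => // ho hS; apply: hv.
  by move: ho hS; case: #|S| => [|[|]].
have Nb : Nk 1 b by move=> S hS; rewrite ffunE hv ?if_same.
have ab : a ** b = b ** a by apply: gr_mulC_even.
have bb : b ** b = 0 by apply: gr_mul_odd_sq.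
have bc : forall m, b ** gr_exp a m = gr_exp a m ** b.
  elim=> [|m IH]; first by rewrite /= gr_mul1l gr_mul1r.
  by rewrite gr_expS gr_mulA -ab -gr_mulA IH gr_mulA.
have key : forall m, gr_exp v m.+1 = gr_exp a m.+1 + (m.+1)%:R *: (gr_exp a m ** b).
  elim=> [|m IH]; first by rewrite /= !gr_mul1r gr_mul1l scale1r -vab.
  rewrite gr_expS IH {1}vab gr_mulDl !gr_mulDr !gr_mulZr.
  have e2 : a ** (gr_exp a m ** b) = gr_exp a m.+1 ** b by rewrite gr_mulA.
  have e4 : b ** (gr_exp a m ** b) = 0 by rewrite gr_mulA bc -gr_mulA bb gr_mul0r.
  rewrite -gr_expS e2 bc e4 scaler0 addr0 -addrA; congr (_ + _).
  by rewrite [(m.+2)%:R]mulrSr scalerDl scale1r.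
have Npow : forall j, Nk (j.*2) (gr_exp a j).
  elim=> [|j IH]; first exact: Nk0.
  by rewrite gr_expS doubleS -addn2 addnC; apply: Nk_mul.
rewrite key; apply: Nk_top; apply: Nk_add.
  apply: Nk_le; last exact: Npow.
  by rewrite doubleS ltnS ltnW // ltnS half_bound.
apply: Nk_scale; apply: Nk_le; last exact: (Nk_mul (Npow _) Nb).
by rewrite addn1 ltnS half_bound.
Qed.

End Gr.

Section RB.
Variables (F : fieldType) (n : nat).
Local Notation G := (gr F n).
Local Notation "x ** y" := (gr_mul x y) (at level 40).
Local Notation one := (gr_one F n).
Variable R : G -> G.
Hypothesis HR : is_RB0 R.
Implicit Types (x y z : G) (a : F).

Lemma Rlin a x y : R (a *: x + y) = a *: R x + R y.
Proof. by case: HR => h _; apply: h. Qed.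
Lemma RBid x y : R x ** R y = R (R x ** y + x ** R y).
Proof. by case: HR => _ h; apply: h. Qed.
Lemma RD x y : R (x + y) = R x + R y.
Proof. by have := Rlin 1 x y; rewrite !scale1r. Qed.
Lemma R0 : R 0 = 0.
Proof. by have := Rlin (-1) 0 0; rewrite scaler0 add0r scaleN1r addNr. Qed.
Lemma RZ a x : R (a *: x) = a *: R x.
Proof. by have := Rlin a x 0; rewrite addr0 R0 addr0. Qed.
Lemma RN x : R (- x) = - R x.
Proof. by rewrite -scaleN1r RZ scaleN1r. Qed.
Lemma RB x y : R (x - y) = R x - R y.
Proof. by rewrite RD RN. Qed.

Lemma R_N1 x : Nk 1 (R x).
Proof.
have N1E : forall v : G, v set0 = 0 -> Nk 1 v.
  by move=> v h S; rewrite ltnS leqn0 cards_eq0 => /eqP ->.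
apply: (N1E (R x)); apply/eqP/negPn/negP => ha.
set al := R x set0 in ha.
have step : forall k, exists z, Nk k.+1 (R z - one).
  elim=> [|k [z hz]].
    exists (al^-1 *: x); apply: N1E; rewrite subE RZ scaleE oneE eqxx.
    by rewrite mulVf // subrr.
  exists (z + z - (R z ** z + z ** R z)); rewrite RB RD -RBid.
  set v := R z - one in hz.
  have -> : R z = v + one by rewrite /v subrK.
  have -> : v + one + (v + one) - (v + one) ** (v + one) - one = - (v ** v).
    rewrite gr_mulDl !gr_mulDr !gr_mul1l gr_mul1r.
    by apply/ffunP => S; rewrite !(addE, subE, oppE); ring.
  apply: Nk_opp; apply: Nk_le; last exact: (Nk_mul hz hz).
  by lia.
have [z hz] := step n.
have e : R z = one by apply/eqP; rewrite -subr_eq0; apply/eqP/Nk_top.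
have := RBid z z; rewrite e !gr_mul1l gr_mul1r RD e => E; have := congr1 (fun w : G => w set0) E => /=.
rewrite addE oneE eqxx -{1}[true%:R]addr0 => /addrI /eqP; rewrite eq_sym oner_eq0.
by [].
Qed.

Local Notation r := (R one).

Lemma R2 x : R (x ** r) = R x ** r - R (R x).
Proof. by rewrite RBid gr_mul1r RD (addrC (R (R x))) addrK. Qed.

Definition D (Y : G -> G) : G -> G := fun x => R (Y x) - Y (R x).

Lemma iterD Z j x : iter j.+1 D Z x = R (iter j D Z x) - iter j D Z (R x).
Proof. by []. Qed.

Lemma leib Y j x : iter j D (fun w => Y w ** r) x =
  iter j D Y x ** r - j%:R *: R (R (iter j.-1 D Y x)).
Proof.
elim: j x => [|j IH] x; first by rewrite /= scale0r subr0.
rewrite iterD !IH.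
have E : j%:R *: R (R (R (iter j.-1 D Y x))) - j%:R *: R (R (iter j.-1 D Y (R x))) =
         j%:R *: R (R (iter j D Y x)).
  case: j {IH} => [|j]; first by rewrite !scale0r subr0.
  by rewrite -scalerBr -!RB.
rewrite RB RZ R2 gr_mulBl [j.+1%:R]mulrSr scalerDl scale1r -E /=.
by apply/ffunP => S; rewrite !(addE, subE, scaleE, oppE); ring.
Qed.

Lemma Dzero Y : (forall x, Y x = 0) -> forall j x, iter j D Y x = 0.
Proof. by move=> h; elim=> [|j IH] x /=; [apply: h | rewrite /D !IH R0 subr0]. Qed.

Definition rho k : G -> G := fun w => iter k (fun u => u ** r) w.

Lemma main k : (forall x, iter k D (rho k) x = (k`!)%:R *: ((-1) ^+ k *: iter k.*2 R x))
  /\ (forall j, (k < j)%N -> forall x, iter j D (rho k) x = 0).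
Proof.
elim: k => [|k [IH1 IH2]].
  split; first by move=> x; rewrite /= !scale1r.
  case=> // j _ x; rewrite iterSr; apply: Dzero => y.
  by rewrite /D /rho /= subrr.
have -> : rho k.+1 = (fun w => rho k w ** r) by [].
split.
  move=> x; rewrite leib IH2 // gr_mul0l sub0r /= IH1 !RZ !scalerA -scaleNr.
  congr (_ *: _); rewrite factS natrM exprS; ring.
move=> j hj x; rewrite leib IH2 ?(ltnW hj) // IH2; last by case: j hj => //= j; rewrite ltnS.
by rewrite gr_mul0l !R0 scaler0 subrr.
Qed.

Lemma pow_comm (p : G) k : gr_exp p k ** p = p ** gr_exp p k.
Proof.
elim: k => [|k IH]; first by rewrite /= gr_mul1l gr_mul1r.
by rewrite gr_expS -gr_mulA IH.
Qed.

Lemma rhoE k y : rho k y = y ** gr_exp r k.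
Proof.
elim: k => [|k IH]; first by rewrite /= gr_mul1r.
by rewrite [rho _ _]/= -/(rho k y) IH -gr_mulA pow_comm.
Qed.

Lemma R_nil k : (k`!)%:R != 0 :> F -> gr_exp r k = 0 -> forall x, iter k.*2 R x = 0.
Proof.
move=> hk hr x; have := (main k).1 x.
rewrite Dzero => [|y]; last by rewrite rhoE hr gr_mul0r.
move/esym/eqP; rewrite scaler_eq0 (negbTE hk) /= scaler_eq0 signr_eq0 /=.
by move/eqP.
Qed.

End RB.

Section Top.
Variables (F : fieldType) (n : nat).
Local Notation G := (gr F n).
Local Notation "x ** y" := (gr_mul x y) (at level 40).
Local Notation one := (gr_one F n).
Implicit Types (x y z : G) (a : F) (V U T S W : {set 'I_n}).

Definition gr_b (V : {set 'I_n}) : G := [ffun S => (S == V)%:R].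
Lemma gr_bE V S : gr_b V S = (S == V)%:R.
Proof. by rewrite ffunE. Qed.

Lemma mul_bE V y W : (gr_b V ** y) W = \sum_T (if PP V T W then sg F V T * y T else 0).
Proof.
rewrite gr_mulE (bigD1 V) //= [X in _ + X]big1 => [|S hS]; last first.
  by apply: big1 => T _; rewrite gr_bE (negbTE hS); case: ifP; rewrite ?mulr0 ?mul0r.
rewrite addr0; apply: eq_bigr => T _; by rewrite gr_bE eqxx mulr1.
Qed.

Lemma mul_bb A B : gr_b A ** gr_b B =
  if [disjoint A & B] then sg F A B *: gr_b (A :|: B) else 0.
Proof.
apply/ffunP => W; rewrite mul_bE (bigD1 B) //= big1 => [|T hT]; last first.
  by rewrite gr_bE (negbTE hT) mulr0; case: ifP.
rewrite gr_bE eqxx mulr1 addr0 /PP.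
case: (boolP [disjoint A & B]) => d /=; last by rewrite zeroE.
by rewrite scaleE gr_bE eq_sym; case: eqP; rewrite ?mulr1 ?mulr0.
Qed.

Lemma Nk_b V : Nk #|V| (gr_b V).
Proof.
move=> S hS; rewrite gr_bE; case: eqP => // eSV.
by move: hS; rewrite eSV ltnn.
Qed.

Lemma Nk_n_top (v : G) : Nk n v -> exists c : F, v = c *: gr_b setT.
Proof.
move=> hv; exists (v setT); apply/ffunP => S; rewrite scaleE gr_bE.
case: (boolP (S == setT)) => [/eqP->|hS]; first by rewrite mulr1.
rewrite mulr0 hv //.
have : (#|S| <= n)%N by rewrite (leq_trans (max_card _)) // card_ord.
rewrite leq_eqVlt => /orP[/eqP e|//].
move: hS; rewrite eqEcard subsetT /= cardsT card_ord e leqnn.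
by [].
Qed.

Lemma PP_top (U T : {set 'I_n}) : PP (~: U) T setT = (T == U).
Proof.
apply/idP/eqP => [/andP[d /eqP e]|->].
  apply/setP => i; case hi: (i \in U).
    have : i \in ~: U :|: T by rewrite e inE.
    by rewrite !inE hi.
  by apply: (disjointFr d); rewrite inE hi.
rewrite /PP disjoints_subset subxx /=.
by apply/eqP/setP => i; rewrite !inE orNb.
Qed.

Lemma big_e_Nk (s : seq 'I_n) : Nk (size s) (\big[@gr_mul F n/one]_(i <- s) gr_e F i).
Proof.
elim: s => [|i s IH]; first by rewrite big_nil; exact: Nk0.
rewrite big_cons /=; apply: (Nk_mul (a := 1)) => // S hS.
rewrite ffunE; case: eqP => // eS; move: hS; rewrite eS cards1.
by [].
Qed.

Lemma top_Nk : Nk n (gr_top F n).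
Proof.
have := big_e_Nk (s := index_enum 'I_n).
rewrite /gr_top (_ : size (index_enum 'I_n) = n) //.
by rewrite /index_enum unlock -enumT size_enum_ord.
Qed.

End Top.

Section Final.
Variables (F : fieldType) (n : nat).
Local Notation G := (gr F n).
Local Notation "x ** y" := (gr_mul x y) (at level 40).
Local Notation one := (gr_one F n).
Implicit Types (x y z : G) (a : F) (V U T S W : {set 'I_n}).

Lemma A0_zero : A0 (0 : G).
Proof.
apply: A0_V; exists (fun _ => 0); symmetry; apply: big1 => i _; by rewrite scale0r.
Qed.

Lemma A0_e (i : 'I_n) : A0 (gr_b F [set i]).
Proof.
apply: A0_V; exists (fun j => (j == i)%:R).
rewrite (bigD1 i) //= big1 => [|j hj]; last by rewrite (negbTE hj) scale0r.
by rewrite eqxx scale1r addr0.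
Qed.

Lemma A0_b k : forall S, #|S| = k.+1 -> A0 (gr_b F S).
Proof.
elim: k => [|k IH] S hS.
  have /cards1P[i ->] : #|S| == 1%N by rewrite hS.
  exact: A0_e.
have /card_gt0P[i iS] : (0 < #|S|)%N by rewrite hS.
have hS' : #|S :\ i| = k.+1 by move: hS; rewrite (cardsD1 i) iS add1n => -[].
have d : [disjoint [set i] & S :\ i].
  by rewrite -setI_eq0; apply/eqP/setP => j; rewrite !inE; case: eqP.
have := mul_bb F [set i] (S :\ i); rewrite d setD1K // => e.
have -> : gr_b F S = sg F [set i] (S :\ i) *: (gr_b F [set i] ** gr_b F (S :\ i)).
  have ss : sg F [set i] (S :\ i) * sg F [set i] (S :\ i) = 1.
    by rewrite /sg -{2}[(-1) ^+ _]mulr1 signrMK.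
  by rewrite e scalerA ss scale1r.
by apply: A0_scale; apply: A0_mul; [exact: A0_e | exact: IH].
Qed.

Lemma N1_A0 (v : G) : Nk 1 v -> A0 v.
Proof.
move=> hv.
have -> : v = \sum_S v S *: gr_b F S.
  apply/ffunP => U; rewrite sum_ffunE (bigD1 U) //= big1 => [|S hS].
    by rewrite scaleE gr_bE eqxx mulr1 addr0.
  by rewrite scaleE gr_bE eq_sym (negbTE hS) mulr0.
apply: (big_ind (@A0 F n)); [exact: A0_zero | by move=> x y; apply: A0_add | move=> S _].
case: (boolP (S == set0)) => [/eqP->|hS].
  by rewrite hv ?cards0 // scale0r; exact: A0_zero.
apply: A0_scale; apply: (A0_b (k := #|S|.-1)).
by rewrite prednK // card_gt0.
Qed.

Variable R : G -> G.
Hypothesis HR : is_RB0 R.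

Lemma R_btop : R (gr_b F setT) = 0.
Proof.
set u := R (gr_b F setT).
have key : forall x, R x ** u = R (x ** u).
  move=> x; rewrite /u RBid // (Nk_top (x := R x ** gr_b F setT)) ?add0r //.
  apply: Nk_le; last exact: (Nk_mul (R_N1 HR x) (Nk_b F (V := setT))).
  by rewrite cardsT card_ord.
apply/ffunP => S0; rewrite zeroE; apply/eqP/negPn/negP => hS0.
case: (arg_minnP (P := fun U => u U != 0) (fun U => #|U|) hS0) => U hU hmin.
have uN : Nk #|U| u.
  move=> S hS; apply/eqP/negPn/negP => h; have := hmin S h.
  by rewrite leqNgt hS.
set V := ~: U.
have [c hw] : exists c : F, gr_b F V ** u = c *: gr_b F setT.
  apply: Nk_n_top; apply: Nk_le; last exact: (Nk_mul (Nk_b F (V := V)) uN).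
  by rewrite addnC cardsC card_ord.
have hc : c != 0.
  have := congr1 (fun z : G => z setT) hw; rewrite scaleE gr_bE eqxx mulr1 => <-.
  rewrite mul_bE (bigD1 U) //= big1 => [|T hT]; last by rewrite PP_top (negbTE hT).
  by rewrite PP_top eqxx addr0 mulf_neq0 // signr_eq0.
have eu : u = (c^-1 *: R (gr_b F V)) ** u.
  by rewrite gr_mulZl key hw RZ // scalerA mulVf // scale1r.
have allk : forall k, Nk k u.
  elim=> [|k IH]; first exact: Nk0.
  rewrite eu; apply: (Nk_mul (a := 1)) => //.
  by apply: Nk_scale; apply: R_N1.
move: hU; rewrite (Nk_top (allk n.+1)) zeroE eqxx.
by [].
Qed.

End Final.

Theorem lemma14 (F : fieldType) (n : nat)
  (charF0 : [pchar F] =i pred0)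
  (R : gr F n -> gr F n) (HR : is_RB0 R) :
  (forall x : gr F n, A0 (R x)) /\
  R (gr_top F n) = 0 /\
  gr_exp (R (gr_one F n)) ((n.+1)./2).+1 = 0 /\
  rb_le F n (2 * (n.+1)./2 + 2)%N.
Proof.
have c0 := (pcharf0P F).1 charF0.
have h2 : (2%:R : F) != 0 by rewrite c0.
split; first by move=> x; apply: N1_A0; apply: R_N1.
split; first by have [c ->] := Nk_n_top (top_Nk F (n:=n)); rewrite RZ // R_btop // scaler0.
split; first by apply: nilp_N1 => //; apply: R_N1.
exists (((n.+1)./2).+1).*2; split; first by rewrite doubleS -mul2n; lia.
move=> R' HR' x; apply: R_nil => //.
  by rewrite c0 -lt0n fact_gt0.
by apply: nilp_N1 => //; apply: R_N1.
Qed.
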